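(* Let $\Lambda_i\in\mathcal H_I$, $i\in[n]$ with $n\ge2$, $\mathbb P$ atomless, and $Y\ge0$ with $1<\mathbb E^{\mathbb P}(Y)<\infty$. Then for all $X\in\mathcal X$ $$\mathop{\square}_{i=1}^n\sup_{\mathbb Q\in\mathcal P(\mathbb P,0,Y)}\Lambda_i\mathrm{VaR}^{\mathbb Q}(X)=\inf_{\mathbf y_{n-1}\in\mathbb R^{n-1}}\inf\{x\in\mathbb R:\mathbb E^{\mathbb P}(Y\mathds 1_{\{X>x\}})\le\Lambda^{\mathbf y_{n-1}}(x)\},$$ where for $\mathbf y_{n-1}=(y_1,\dots,y_{n-1})$ and $y_0=0$, $\Lambda^{\mathbf y_{n-1}}(x)=\Lambda_n(x-y_{n-1})+\sum_{i=1}^{n-1}\Lambda_i(y_i-y_{i-1})$.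
   Context: $\Lambda\mathrm{VaR}^{\mathbb Q}(X)=\inf\{x\in\mathbb R:\mathbb Q(X>x)\le\Lambda(x)\}$; $\mathcal H_I$: increasing functions $\mathbb R\to(0,1)$. $\mathcal P(\mathbb P,0,Y)=\{\mathbb Q\ll\mathbb P:0\le\mathrm d\mathbb Q/\mathrm d\mathbb P\le Y\}$. Inf-convolution $\mathop{\square}_i\rho_i(X)=\inf\{\sum_i\rho_i(X_i):X_i\in\mathcal X,\sum_iX_i=X\}$, $\mathcal X$ a set of real-valued random variables containing constants, closed under sums, differences, multiplication by indicators. *)

(* Defs.v *)
From HB Require Import structures.
From mathcomp Require Import all_boot all_order all_algebra.
From mathcomp Require Import all_classical all_reals all_analysis.
Set Implicit Arguments. Unset Strict Implicit. Unset Printing Implicit Defensive.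
Import Order.TTheory GRing.Theory Num.Theory.
Local Open Scope classical_set_scope.
Local Open Scope ring_scope.
Local Open Scope ereal_scope.

Section Defs.
Context (R : realType) (d : measure_display) (T : measurableType d).

Definition atomless (P : probability T R) : Prop :=
  forall A : set T, measurable A -> 0 < P A ->
    exists B : set T, [/\ measurable B, B `<=` A, 0 < P B & P B < P A].

Definition HI (L : R -> R) : Prop :=
  (forall x y : R, (x <= y)%R -> (L x <= L y)%R) /\
  (forall x : R, (0 < L x)%R /\ (L x < 1)%R).

Definition Pset (P : probability T R) (Y : T -> R) : set (probability T R) :=
  [set Q : probability T R | exists f : T -> R,
     [/\ measurable_fun setT f,
         (forall w, (0 <= f w)%R /\ (f w <= Y w)%R) &
         (forall A : set T, measurable A ->
            Q A = \int[P]_(w in A) (f w)%:E)]].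

Definition LVaR (L : R -> R) (Q : probability T R) (X : T -> R) : \bar R :=
  ereal_inf [set x%:E | x in [set x : R | Q [set w | (x < X w)%R] <= (L x)%:E]].

Definition supLVaR (P : probability T R) (Y : T -> R) (L : R -> R) (X : T -> R)
  : \bar R :=
  ereal_sup [set LVaR L Q X | Q in Pset P Y].

Definition admissible (Xs : set (T -> R)) : Prop :=
  [/\ (forall X, Xs X -> measurable_fun setT X),
      (forall c : R, Xs (fun _ => c)),
      (forall X1 X2, Xs X1 -> Xs X2 -> Xs (fun w => X1 w + X2 w)%R),
      (forall X1 X2, Xs X1 -> Xs X2 -> Xs (fun w => X1 w - X2 w)%R) &
      (forall X (A : set T), Xs X -> measurable A ->
          Xs (fun w => X w * (\1_A w : R))%R)].

Definition infconv (Xs : set (T -> R)) (n : nat)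
  (rho : nat -> (T -> R) -> \bar R) (X : T -> R) : \bar R :=
  ereal_inf [set (\sum_(1 <= i < n.+1) rho i (Xi i))%E |
     Xi in [set Xi : nat -> T -> R |
        (forall i, (1 <= i <= n)%N -> Xs (Xi i)) /\
        (forall w, (\sum_(1 <= i < n.+1) Xi i w)%R = X w)]].

(* Lambda^{y_{n-1}}(x) = Lambda_n(x - y_{n-1}) + sum_{i=1}^{n-1} Lambda_i(y_i - y_{i-1}),
   with y : nat -> R, y 0 = 0 *)
Definition Lam_y (L : nat -> R -> R) (n : nat) (y : nat -> R) (x : R) : R :=
  (L n (x - y n.-1) + \sum_(1 <= i < n) L i (y i - y i.-1))%R.

End Defs.

(* Main.v *)
Require Import Defs.
From HB Require Import structures.
From mathcomp Require Import all_boot all_order all_algebra.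
From mathcomp Require Import all_classical all_reals all_analysis.
From mathcomp Require Import measurable_realfun.
From mathcomp Require Import ring lra.
Import Order.TTheory GRing.Theory Num.Theory.
Local Open Scope classical_set_scope.
Local Open Scope ring_scope.
Local Open Scope ereal_scope.
Local Open Scope classical_set_scope.
Local Open Scope ring_scope.
Local Open Scope ereal_scope.

Section gen.
Context {R : realType} d (T : measurableType d) (mu : {measure set T -> \bar R}).

Lemma mu_cup_le (F : nat -> set T) (c : \bar R) :
  (forall k, measurable (F k)) -> (forall k, F k `<=` F k.+1) ->
  (forall k, mu (F k) <= c) -> mu (\bigcup_k F k) <= c.
Proof.
move=> mF incF Fc.
have ndF : nondecreasing_seq F.
  apply/nondecreasing_seqP. 
  by move=> k; apply/subsetPset; exact: incF.
have h := @nondecreasing_cvg_mu _ _ R mu F mF (bigcup_measurable (fun k _ => mF k)) ndF.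
rewrite -(cvg_lim _ h) //.
apply: lime_le; first by apply/cvg_ex; eexists; exact: h.
by apply: nearW => k; exact: Fc.
Qed.
Hypothesis mufin : mu setT < +oo.
Definition mr (A : set T) : R := fine (mu A).

Lemma muE A : measurable A -> mu A = (mr A)%:E.
Proof.
move=> mA; rewrite /mr fineK // ge0_fin_numE ?measure_ge0 //.
by rewrite (le_lt_trans _ mufin) // le_measure // inE.
Qed.

Lemma mr_ge0 A : (0 <= mr A)%R.
Proof. by rewrite /mr fine_ge0 // measure_ge0. Qed.

Lemma mr_le A B : measurable A -> measurable B -> A `<=` B -> (mr A <= mr B)%R.
Proof.
move=> mA mB AB; rewrite -lee_fin -muE // -muE //.
by rewrite le_measure // inE.
Qed.

Lemma mr0 : mr set0 = 0%R.
Proof. by rewrite /mr measure0. Qed.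

Lemma mrU A B : measurable A -> measurable B -> A `&` B = set0 ->
  mr (A `|` B) = (mr A + mr B)%R.
Proof.
move=> mA mB AB; apply: EFin_inj; rewrite -muE ?EFinD -?muE //; last exact: measurableU.
exact: measureU.
Qed.

Lemma mrD A B : measurable A -> measurable B -> B `<=` A ->
  mr (A `\` B) = (mr A - mr B)%R.
Proof.
move=> mA mB BA.
have -> : mr A = (mr (A `\` B) + mr B)%R.
  rewrite -mrU.
  - by rewrite setUC setDUK.
  - exact: measurableD.
  - done.
  - by rewrite setDE -setIA setICl setI0.
by rewrite addrK.
Qed.

End gen.
Arguments mr {R d T} mu A.
Arguments muE {R d T mu} mufin [A] _.
Arguments mr_ge0 {R d T} mu A.
Arguments mr_le {R d T mu} mufin [A B] _ _ _.
Arguments mrU {R d T mu} mufin [A B] _ _ _.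
Arguments mrD {R d T mu} mufin [A B] _ _ _.
Arguments mr0 {R d T} mu.
Arguments mu_cup_le {R d T} mu [F c] _ _ _.

Local Close Scope ereal_scope.
Local Open Scope classical_set_scope.
Local Open Scope ring_scope.

Section ivp.
Context {R : realType} d (T : measurableType d) (mu : {measure set T -> \bar R}).
Hypothesis mufin : (mu setT < +oo)%E.
Local Notation m := (@mr R d T mu).
Hypothesis small : forall A, measurable A -> 0 < m A -> forall e : R, 0 < e ->
  exists B, [/\ measurable B, B `<=` A, 0 < m B & m B < e].

Lemma ivp_step (S : set T) (c : R) (B : set T) : measurable S ->
  exists C, [/\ measurable C, C `<=` S `\` B &
    (m B <= c -> m B + m C <= c /\
      forall D, measurable D -> D `<=` S `\` B -> m B + m D <= c -> m D <= 2 * m C)].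
Proof.
move=> mS.
have [Bc|Bc] := leP (m B) c; last first.
  by exists set0; split => //; exact: sub0set.
pose E := [set m D | D in [set D | [/\ measurable D, D `<=` S `\` B & m B + m D <= c]]].
have E0 : E 0.
  by exists set0; [split => //; rewrite ?mr0 ?addr0 // | exact: mr0].
have Eub : ubound E c.
  move=> _ [D [_ _ HD] <-]; have := (@mr_ge0 _ _ _ mu B); lra.
have hs : has_sup E by split; [exists 0|exists c].
have [s0|s0] := leP (sup E) 0.
  exists set0; split => //.
  move=> _; split; first by rewrite mr0 addr0.
  move=> D mD DS HD; rewrite mr0 mulr0.
  apply: le_trans s0; apply: sup_upper_bound => //; by exists D.
have [_ [C [mC CS HC] <-] HsC] := @sup_adherent _ E (sup E / 2) (divr_gt0 s0 (ltr0Sn R 1)) hs.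
exists C; split => // _; split => // D mD DS HD.
have : m D <= sup E by apply: sup_upper_bound => //; exists D.
lra.
Qed.

Lemma ivp (S : set T) (c : R) : measurable S -> 0 <= c -> c <= m S ->
  exists B, [/\ measurable B, B `<=` S & m B = c].
Proof.
move=> mS c0 cS.
have [g Hg] := choice (fun B => ivp_step S c B mS).
pose F := fix F k := match k with 0%N => set0 | k.+1 => F k `|` g (F k) end.
have HF : forall k, [/\ measurable (F k), F k `<=` S & m (F k) <= c].
  elim=> [|k [mk Sk ck]] /=; first by split => //; rewrite mr0.
  have [mg gS Hgk] := Hg (F k).
  have [gc _] := Hgk ck.
  have disj : F k `&` g (F k) = set0.
    by rewrite -subset0 => x [Fx /gS [_ nF]]; exact: nF Fx.
  split; [exact: measurableU| |by rewrite mrU].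
  by move=> x [/Sk|/gS[]].
have mF k : measurable (F k) by case: (HF k).
pose B := \bigcup_k F k.
have mB : measurable B by exact: bigcup_measurable.
have BS : B `<=` S by move=> x [k _ Fx]; case: (HF k) => _ + _; apply.
exists B; split => //.
have Bc : m B <= c.
  rewrite -lee_fin -muE //; apply: mu_cup_le => // [k|k].
    by move=> x Fx /=; left.
  by rewrite muE // lee_fin; case: (HF k).
apply/eqP; rewrite eq_le Bc /=; rewrite leNgt; apply/negP => Blt.
have mSB : measurable (S `\` B) by exact: measurableD.
have SBpos : 0 < m (S `\` B) by rewrite mrD //; lra.
have e0 : 0 < c - m B by rewrite subr_gt0.
have [D [mD DS D0 Dlt]] := small _ mSB SBpos _ e0.
have Dk k : m D <= 2 * m (g (F k)).
  have [_ _ Hgk] := Hg (F k).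
  have [mk Sk ck] := HF k.
  have [_ ] := Hgk ck; apply => //.
    by move=> x /DS [Sx nBx]; split => // Fx; apply: nBx; exists k.
  have : m (F k) <= m B by apply: mr_le => //; move=> x Fx; exists k.
  lra.
have lowF k : k%:R * (m D / 2) <= m (F k).
  elim: k => [|k IH] /=; first by rewrite mul0r mr0.
  have [mk Sk ck] := HF k.
  have [mg gS _] := Hg (F k).
  have disj : F k `&` g (F k) = set0.
    by rewrite -subset0 => x [Fx /gS [_ nF]]; exact: nF Fx.
  rewrite mrU // -natr1 mulrDl mul1r; have := Dk k; lra.
pose k := Num.bound (c / (m D / 2)).
have hk := archi_boundP (divr_ge0 c0 (ltW (divr_gt0 D0 (ltr0Sn R 1)))).
have := lowF k; have := (HF k); case => _ _ ck.
rewrite -/k in hk.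
rewrite ltr_pdivrMr ?divr_gt0 // in hk.
lra.
Qed.

Lemma split_pieces k : forall (c : nat -> R) S, (forall i, 0 <= c i) -> measurable S ->
  m S <= \sum_(0 <= i < k.+1) c i ->
  exists A : nat -> set T, [/\ forall i, measurable (A i), forall i, A i `<=` S,
    forall i j, i != j -> A i `&` A j = set0, forall i, m (A i) <= c i &
    forall w, S w -> exists2 i, (i <= k)%N & A i w].
Proof.
elim: k => [|k IH] c S c0 mS HS.
  exists (fun i => if i == 0%N then S else set0); split.
  - by move=> [|i] /=.
  - by move=> [|i] //= x.
  - by move=> [|i] [|j] //= _; rewrite ?setI0 ?set0I.
  - by move=> [|i] /=; [move: HS; rewrite big_nat1|rewrite mr0].
  - by move=> w Sw; exists 0%N.
have [B [mB BS [HSB HB]]] : exists B, [/\ measurable B, B `<=` S &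
    m (S `\` B) <= \sum_(0 <= i < k.+1) c i.+1 /\ m B <= c 0%N].
  case: (leP (c 0%N) (m S)) => h.
  - have [B [mB BS mBe]] := ivp S (c 0%N) mS (c0 0%N) h.
    exists B; split => //; split; last by rewrite mBe.
    rewrite mrD // mBe; move: HS; rewrite big_nat_recl //; lra.
  - have [B [mB BS mBe]] := ivp S (m S) mS (@mr_ge0 _ _ _ mu S) (lexx _).
    exists B; split => //; split; last by rewrite mBe ltW.
    rewrite mrD // mBe subrr; apply: sumr_ge0 => i _; exact: c0.
have mSB : measurable (S `\` B) by exact: measurableD.
have [A' [mA' A'S A'd A'c A'w]] := IH (fun i => c i.+1) (S `\` B) (fun i => c0 i.+1) mSB HSB.
exists (fun i => if i is i'.+1 then A' i' else B); split.
- by move=> [|i].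
- move=> [|i] //= x /A'S []//.
- have dB j : B `&` A' j = set0.
    by rewrite -subset0 => x [Bx /A'S [_ nB]]; exact: nB Bx.
  move=> [|i] [|j] //= ij; [by rewrite setIC dB | exact: A'd].
- by move=> [|i].
- move=> w Sw; have [Bw|nBw] := pselect (B w); first by exists 0%N.
  have [i ik Aw] := A'w w (conj Sw nBw).
  by exists i.+1.
Qed.
End ivp.
Arguments ivp {R d T mu} mufin small [S c] _ _ _.
Arguments split_pieces {R d T mu} mufin small k c S _ _ _.

Local Open Scope classical_set_scope.
Local Open Scope ring_scope.

Section meas_help.
Context {R : realType} d (T : measurableType d).

Lemma meas_gt (Z : T -> R) (r : R) : measurable_fun setT Z ->
  measurable [set w | r < Z w].
Proof.
move=> mZ; have := mZ measurableT _ (measurable_itv `]r, +oo[).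
rewrite setTI; congr measurable; apply/seteqP; split => w /=;
  by rewrite in_itv /= andbT.
Qed.

Lemma meas_lt (Z : T -> R) (r : R) : measurable_fun setT Z ->
  measurable [set w | Z w < r].
Proof.
move=> mZ; have := mZ measurableT _ (measurable_itv `]-oo, r[).
rewrite setTI; congr measurable; apply/seteqP; split => w /=;
  by rewrite in_itv /=.
Qed.
End meas_help.

Local Open Scope classical_set_scope.
Local Open Scope ring_scope.

Section dens.
Context {R : realType} d (T : measurableType d) (P : probability T R) (Y : T -> R).
Hypothesis mY : measurable_fun setT Y.
Hypothesis Y0 : forall w, 0 <= Y w.
Hypothesis Yfin : (\int[P]_w (Y w)%:E < +oo)%E.
Hypothesis Pal : atomless P.

Definition nu (A : set T) : \bar R := (\int[P]_(w in A) (Y w)%:E)%E.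
Let nu0 : nu set0 = 0%E. Proof. by rewrite /nu integral_set0. Qed.
Let nu_ge0 A : (0 <= nu A)%E. Proof. by apply: integral_ge0 => w _; rewrite lee_fin. Qed.
Let mEY : measurable_fun setT (EFin \o Y : T -> \bar R).
Proof. exact: measurableT_comp. Qed.
Let nu_ssa : semi_sigma_additive nu.
Proof. apply: (@semi_sigma_additive_nng_induced _ _ _ P) => // w; rewrite lee_fin. Qed.
HB.instance Definition _ := isMeasure.Build _ _ _ nu nu0 nu_ge0 nu_ssa.

Lemma nufin : (nu setT < +oo)%E. Proof. exact: Yfin. Qed.
Lemma Pfin : (P setT < +oo)%E. Proof. by rewrite probability_setT ltry. Qed.

Local Notation m := (@mr R d T nu).
Local Notation p := (@mr R d T P).

Lemma nu_small A : measurable A -> 0 < m A -> forall e : R, 0 < e ->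
  exists B, [/\ measurable B, B `<=` A, 0 < m B & m B < e].
Proof.
move=> mA mA0 e e0.
pose E j := A `&` [set w | j.+1%:R^-1 < Y w] `&` [set w | Y w < j.+1%:R].
have mE j : measurable (E j).
  by apply: measurableI; [apply: measurableI => //; exact: meas_gt|exact: meas_lt].
have [j Ej] : exists j, 0 < p (E j).
  apply/not_existsP => H.
  have PE j : P (E j) = 0%E.
    rewrite (muE Pfin (mE j)); apply/eqP; rewrite eqe eq_le mr_ge0 andbT.
    by rewrite leNgt; apply/negP => h; apply: (H j).
  have mApos : measurable (A `&` [set w | 0 < Y w]) by apply: measurableI => //; exact: meas_gt.
  have P0 : P (A `&` [set w | 0 < Y w]) = 0%E.
    apply/eqP; rewrite eq_le measure_ge0 andbT.
    have : (P (\bigcup_j E j) <= 0)%E.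
      apply: mu_cup_le => [k|k|k]; [exact: mE| |by rewrite /= PE].
      move=> w [[Aw h1] h2]; split; [split => //|].
        by apply: le_lt_trans h1; rewrite lef_pV2 ?posrE // ler_nat.
      by apply: (lt_trans h2); rewrite ltr_nat.
    apply: le_trans; apply: le_measure; rewrite ?inE //.
      by apply: bigcup_measurable => k _; exact: mE.
    move=> w [Aw /= Yw]; exists (Num.bound (Y w + (Y w)^-1)) => //.
    have Yi : 0 < (Y w)^-1 by rewrite invr_gt0.
    have hb := archi_boundP (addr_ge0 (ltW Yw) (ltW Yi)).
    split; [split => //|].
      rewrite /= -[X in _ < X]invrK ltf_pV2 ?posrE ?invr_gt0 ?ltr0Sn // -natr1; lra.
    rewrite /= -natr1; lra.
  have mB : measurable [set w | 0 < Y w] by exact: meas_gt.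
  have h1 : nu (A `&` [set w | 0 < Y w]) = 0%E.
    by rewrite /nu null_set_integral //; exact: measurable_funTS.
  have h2 : nu (A `\` [set w | 0 < Y w]) = 0%E.
    rewrite /nu (eq_integral (fun _ => 0%E)) ?integral0 // => w.
    rewrite inE => -[_ /= nw]; congr EFin; apply/eqP; rewrite eq_le Y0 andbT leNgt.
    by apply/negP.
  have nuA0 : nu A = (nu (A `\` [set w | (0 < Y w)%R]) + nu (A `&` [set w | (0 < Y w)%R]))%E := measureDI nu mA mB.
  rewrite h1 h2 adde0 in nuA0.
  have h3 : ((mr nu A)%:E = 0)%E by rewrite -(muE nufin mA); exact: nuA0.
  have h4 : mr nu A = 0 by case: h3.
  by move: mA0; rewrite h4 ltxx.
pose K : R := j.+1%:R.
pose a : R := j.+1%:R^-1.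
have K0 : 0 < K by rewrite ltr0Sn.
have a0 : 0 < a by rewrite invr_gt0.
have half k : exists B, [/\ measurable B, B `<=` E j, 0 < p B & p B * 2^+k <= p (E j)].
  elim: k => [|k [B [mB BE B0 Bk]]]; first by exists (E j); split => //; rewrite expr0 mulr1.
  have B0' : (0 < P B)%E by rewrite (muE Pfin mB) lte_fin.
  have [C [mC CB C0 CB']] := Pal _ mB B0'.
  move: C0 CB'; rewrite (muE Pfin mC) (muE Pfin mB) !lte_fin => C0 CB'.
  have t0 : 0 <= 2^+k :> R by rewrite exprn_ge0.
  case: (leP (p C * 2) (p B)) => h.
  - exists C; split => //; first exact: subset_trans CB BE.
    rewrite exprS mulrA; apply: le_trans Bk; rewrite ler_wpM2r //.
  - exists (B `\` C); split.
    + exact: measurableD.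
    + by move=> x [/BE].
    + rewrite (mrD Pfin) //; lra.
    + rewrite (mrD Pfin) // exprS mulrA; apply: le_trans Bk; rewrite ler_wpM2r //; lra.
pose k := Num.bound (K * p (E j) / e).
have hk : K * p (E j) / e < 2%:R ^+ k by apply: upper_nthrootP.
have [B [mB BE B0 Bk]] := half k.
have t0 : 0 < 2^+k :> R by rewrite exprn_gt0.
have BY w : B w -> a < Y w /\ Y w < K by move=> /BE [[_ h1] h2].
have mYB : measurable_fun B (EFin \o Y) by exact: measurable_funTS.
have up : (nu B <= K%:E * P B)%E.
  rewrite -integral_cst //; apply: ge0_le_integral => //.
  - by move=> w _; rewrite lee_fin.
  - by move=> w /BY [_ h]; rewrite lee_fin ltW.
have lo : (a%:E * P B <= nu B)%E.
  rewrite -integral_cst //; apply: ge0_le_integral => //.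
  - by move=> w _; rewrite lee_fin ltW.
  - by move=> w /BY [h _]; rewrite lee_fin ltW.
move: up lo; rewrite (muE nufin mB) (muE Pfin mB) -!EFinM !lee_fin => up lo.
exists B; split => //.
  by move=> x /BE [[]].
  by apply: lt_le_trans lo; rewrite mulr_gt0.
apply: le_lt_trans up _.
rewrite ltr_pdivrMr // in hk.
have : K * p B * 2^+k <= K * p (E j) by rewrite -mulrA ler_wpM2l // ltW.
move=> h; rewrite -(ltr_pM2r t0); apply: le_lt_trans h _; by rewrite [e * _]mulrC.
Qed.

Lemma nu_split k (c : nat -> R) S : (forall i, 0 <= c i) -> measurable S ->
  (nu S <= (\sum_(0 <= i < k.+1) c i)%:E)%E ->
  exists A : nat -> set T, [/\ forall i, measurable (A i), forall i, A i `<=` S,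
    forall i j, i != j -> A i `&` A j = set0, forall i, (nu (A i) <= (c i)%:E)%E &
    forall w, S w -> exists2 i, (i <= k)%N & A i w].
Proof.
move=> c0 mS hS.
have h : m S <= \sum_(0 <= i < k.+1) c i.
  by rewrite -lee_fin -(muE nufin mS).
have [A [mA AS Ad Ac Aw]] := split_pieces nufin nu_small k c S c0 mS h.
exists A; split => // i.
have e := muE nufin (mA i).
have -> : nu (A i) = (m (A i))%:E by exact: e.
by rewrite lee_fin.
Qed.

Lemma nu_sub n (B : nat -> set T) : (forall i, measurable (B i)) ->
  forall S, measurable S -> (forall w, S w -> exists2 i, (1 <= i <= n)%N & B i w) ->
  (nu S <= \sum_(1 <= i < n.+1) nu (B i))%E.
Proof.
move=> mB; elim: n => [|n IH] S mS HS.
  rewrite big_geq //.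
  have -> : S = set0.
    by apply/seteqP; split => // w /HS [i /andP [h1 h2]]; move: (leq_trans h1 h2).
  by rewrite /nu integral_set0.
have mSB : measurable (S `\` B n.+1) by exact: measurableD.
have mSI : measurable (S `&` B n.+1) by exact: measurableI.
have e : nu S = (nu (S `\` B n.+1) + nu (S `&` B n.+1))%E := measureDI nu mS (mB n.+1).
rewrite e big_nat_recr //=; apply: leeD.
  apply: IH => // w [Sw nBw]; have [i /andP [i1 i2] Bi] := HS w Sw.
  exists i => //; rewrite i1 /=; rewrite leq_eqVlt in i2.
  case/orP: i2 => [/eqP [ei]|]; last by rewrite ltnS.
  by move: Bi; rewrite ei.
have e2 : (nu (S `&` B n.+1) <= nu (B n.+1))%E.
  by apply: (le_measure nu); rewrite ?inE //; exact: subIsetr.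
exact: e2.
Qed.

Lemma nu_real A : measurable A -> nu A = (fine (nu A))%:E /\ 0 <= fine (nu A).
Proof.
move=> mA; have e := muE nufin mA; split; first exact: e.
exact: (mr_ge0 nu A).
Qed.

Lemma nu_compl A : measurable A -> fine (nu setT) = fine (nu A) + fine (nu (~` A)).
Proof.
move=> mA; have := mrU nufin mA (measurableC mA) (setICr A).
by rewrite setUv.
Qed.

Lemma nu_mono A B : measurable A -> measurable B -> A `<=` B -> (nu A <= nu B)%E.
Proof. by move=> mA mB AB; apply: (le_measure nu); rewrite ?inE. Qed.

Lemma nu_cup (F : nat -> set T) (c : \bar R) :
  (forall k, measurable (F k)) -> (forall k, F k `<=` F k.+1) ->
  (forall k, (nu (F k) <= c)%E) -> (nu (\bigcup_k F k) <= c)%E.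
Proof. move=> mF iF Fc; exact: (mu_cup_le nu mF iF Fc). Qed.

Section dprob.
Variable f : T -> R.
Hypothesis mf : measurable_fun setT f.
Hypothesis f0 : forall w, 0 <= f w.
Hypothesis f1 : (\int[P]_w (f w)%:E = 1)%E.
Definition densm (S : set T) : \bar R := (\int[P]_(w in S) (f w)%:E)%E.
Let densm0 : densm set0 = 0%E. Proof. by rewrite /densm integral_set0. Qed.
Let densm_ge0 S : (0 <= densm S)%E. Proof. by apply: integral_ge0 => w _; rewrite lee_fin. Qed.
Let mEf : measurable_fun setT (EFin \o f : T -> \bar R).
Proof. exact: measurableT_comp. Qed.
Let densm_ssa : semi_sigma_additive densm.
Proof. apply: (@semi_sigma_additive_nng_induced _ _ _ P) => // w; rewrite lee_fin. Qed.
HB.instance Definition _ := isMeasure.Build _ _ _ densm densm0 densm_ge0 densm_ssa.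
Let densm1 : densm setT = 1%E. Proof. exact: f1. Qed.
HB.instance Definition _ := Measure_isProbability.Build _ _ _ densm densm1.

Lemma dens_prob_ex : exists Q : probability T R,
  forall S, measurable S -> Q S = (\int[P]_(w in S) (f w)%:E)%E.
Proof. by exists densm. Qed.
End dprob.

End dens.

Local Open Scope classical_set_scope.
Local Open Scope ring_scope.

Section main.
Context {R : realType} d (T : measurableType d) (P : probability T R) (Y : T -> R).
Hypothesis mY : measurable_fun setT Y.
Hypothesis Y0 : forall w, 0 <= Y w.
Hypothesis Yfin : (\int[P]_w (Y w)%:E < +oo)%E.
Hypothesis Pal : atomless P.
Hypothesis Ygt1 : (1 < \int[P]_w (Y w)%:E)%E.
Local Notation nuY := (@nu R d T P Y).
Let nreal := @nu_real _ _ _ P Y mY Y0 Yfin.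
Let nmono := @nu_mono _ _ _ P Y mY Y0.
Let ncompl := @nu_compl _ _ _ P Y mY Y0 Yfin.

Lemma Q_le_nu (Q : probability T R) A : Pset P Y Q -> measurable A -> (Q A <= nuY A)%E.
Proof.
move=> [f [mf fY QE]] mA; rewrite QE //; apply: ge0_le_integral => //.
- by move=> w _; rewrite lee_fin; case: (fY w).
- by apply: measurable_funTS; exact: measurableT_comp.
- by apply: measurable_funTS; exact: measurableT_comp.
- by move=> w _; rewrite lee_fin; case: (fY w).
Qed.

Lemma supL_le (L : R -> R) (Z : T -> R) (x : R) : measurable_fun setT Z ->
  (nuY [set w | (x < Z w)%R] <= (L x)%:E)%E -> (supLVaR P Y L Z <= x%:E)%E.
Proof.
move=> mZ hx; apply: ge_ereal_sup => _ [Q PQ <-].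
apply: ereal_inf_lbound; exists x => //=.
apply: le_trans hx; apply: Q_le_nu => //; exact: meas_gt.
Qed.


Lemma supL_ge (L : R -> R) (Z : T -> R) (x : R) : HI L -> measurable_fun setT Z ->
  ((L x)%:E < nuY [set w | (x < Z w)%R])%E -> (x%:E <= supLVaR P Y L Z)%E.
Proof.
move=> [Lmono Lb] mZ hx.
set A := [set w | (x < Z w)%R].
have mA : measurable A by exact: meas_gt.
have mAc : measurable (~` A) := measurableC mA.
have [eA a0] := nreal _ mA.
have [eAc b0] := nreal _ mAc.
have [eT _] := nreal _ measurableT.
have hM := ncompl _ mA.
set a := fine (nuY A) in eA a0 hM *.
set b := fine (nuY (~` A)) in eAc b0 hM *.
set M := fine (nuY setT) in eT hM *.
have M1 : 1 < M.
  have h : (1 < nuY setT)%E := Ygt1.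
  by move: h; rewrite eT lte_fin.
have Lxa : L x < a by move: hx; rewrite eA lte_fin.
have [Lx0 Lx1] := Lb x.
have [al [be [al0 al1 be0 be1 [hab hLa]]]] : exists al be : R,
    [/\ 0 <= al, al <= 1, 0 <= be, be <= 1 & al * a + be * b = 1 /\ L x < al * a].
  case: (leP a 1) => ha.
  - have bp : 0 < b by lra.
    exists 1, ((1 - a) / b); split => //.
    + by apply: divr_ge0; lra.
    + by rewrite ler_pdivrMr //; lra.
    + split; last by lra.
      by rewrite mul1r mulrAC -mulrA divff ?gt_eqF // mulr1; lra.
  - have ap : 0 < a by lra.
    exists a^-1, 0; split => //.
    + by rewrite invr_ge0 ltW.
    + by rewrite invf_le1 // ltW.
    + by rewrite mul0r addr0 mulVf ?gt_eqF //; split => //; lra.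
pose f := fun w => al * Y w * \1_A w + be * Y w * \1_(~` A) w.
have mf : measurable_fun setT f.
  apply: measurable_funD; apply: measurable_funM; try apply: measurable_funM;
    try exact: measurable_cst; try exact: mY; exact: measurable_indic.
have fA w : A w -> f w = al * Y w.
  by move=> Aw; rewrite /f !indicE in_setC mem_set //= mulr1 mulr0 addr0.
have fAc w : ~ A w -> f w = be * Y w.
  by move=> Aw; rewrite /f !indicE in_setC memNset //= mulr1 mulr0 add0r.
have f0 w : 0 <= f w.
  by case: (pselect (A w)) => h; [rewrite fA|rewrite fAc] => //; apply: mulr_ge0.
have fY w : f w <= Y w.
  have := Y0 w; case: (pselect (A w)) => h; [rewrite fA|rewrite fAc] => //; nra.
have mEY : measurable_fun setT (EFin \o Y : T -> \bar R) by exact: measurableT_comp.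
have IA : (\int[P]_(w in A) (f w)%:E = al%:E * nuY A)%E.
  rewrite -ge0_integralZl_EFin //.
  - by apply: eq_integral => w; rewrite inE => Aw; rewrite fA // EFinM.
  - by move=> w _; rewrite lee_fin.
  - exact: measurable_funTS.
have IAc : (\int[P]_(w in ~` A) (f w)%:E = be%:E * nuY (~` A))%E.
  rewrite -ge0_integralZl_EFin //.
  - by apply: eq_integral => w; rewrite inE => Aw; rewrite fAc // EFinM.
  - by move=> w _; rewrite lee_fin.
  - exact: measurable_funTS.
have IT : (\int[P]_w (f w)%:E = 1)%E.
  rewrite -(setUv A) ge0_integral_setU //.
  - by rewrite IA IAc eA eAc -!EFinM -EFinD hab.
  - by rewrite setUv; exact: measurableT_comp.
  - by move=> w _; rewrite lee_fin.
  - by rewrite disj_set2E setICr.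
have [Q QE] := @dens_prob_ex _ _ _ P f mf f0 IT.
have PQ : Pset P Y Q by exists f; split => // w; split.
have QA : Q A = (al * a)%:E by rewrite QE // IA eA -EFinM.
apply: (@le_trans _ _ (LVaR L Q Z)); last by apply: ereal_sup_ubound; exists Q.
apply: le_ereal_inf_tmp => _ [z hz <-]; rewrite lee_fin.
rewrite leNgt; apply/negP => zx.
have h : (Q A <= Q [set w | (z < Z w)%R])%E.
  apply: le_measure; rewrite ?inE //; first exact: meas_gt.
  by move=> w /= xw; exact: lt_trans zx xw.
have := le_trans h hz; rewrite QA lee_fin => h2.
have := Lmono z x (ltW zx).
lra.
Qed.

Lemma supL_gtNy (L : R -> R) (Z : T -> R) : HI L -> measurable_fun setT Z ->
  (-oo < supLVaR P Y L Z)%E.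
Proof.
move=> HL mZ.
have [k hk] : exists k : nat,
    ((L (- k%:R))%:E < nuY [set w | (- k%:R < Z w)%R])%E.
  apply/not_existsP => H.
  have h : (nuY (\bigcup_k [set w | (- k%:R < Z w)%R]) <= (L 0)%:E)%E.
    apply: (@nu_cup _ _ _ P Y mY Y0) => [k|k|k].
    - exact: meas_gt.
    - move=> w /= h; apply: le_lt_trans h; rewrite lerN2 ler_nat; exact: leqnSn.
    - have := H k; move/negP; rewrite -leNgt => h; apply: le_trans h _; rewrite lee_fin.
      by apply: HL.1; rewrite oppr_le0 ler0n.
  have e : \bigcup_k [set w | (- k%:R < Z w)%R] = setT.
    apply/seteqP; split => // w _; exists (Num.bound `|Z w|) => //=.
    have := archi_boundP (normr_ge0 (Z w)).
    rewrite ltrNl => hb; apply: le_lt_trans hb; rewrite -normrN; exact: ler_norm.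
  rewrite e in h.
  have h2 : (1 < nuY setT)%E := Ygt1.
  have := lt_le_trans h2 h; rewrite lte_fin; move: (HL.2 0) => [_ h1].
  by rewrite ltNge (ltW h1).
apply: (lt_le_trans _ (supL_ge _ _ _ HL mZ hk)); exact: ltNyr.
Qed.

End main.

Local Open Scope classical_set_scope.
Local Open Scope ring_scope.

Lemma sum_delta {R : realType} n j0 :
  \sum_(0 <= j < n) ((j == j0)%:R : R) = (j0 < n)%:R.
Proof.
elim: n => [|n IH]; first by rewrite big_geq.
rewrite big_nat_recr //= IH [in RHS]ltnS [in RHS]leq_eqVlt.
by case: (ltngtP j0 n) => h //=; rewrite ?addr0 ?add0r ?orbT.
Qed.

Lemma ind_sum {R : realType} {T : Type} (B : nat -> set T) n j0 w :
  (forall i j, i != j -> B i `&` B j = set0) -> (j0 < n)%N -> B j0 w ->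
  \sum_(0 <= j < n) (\1_(B j) w : R) = 1.
Proof.
move=> Bd jn Bw.
rewrite (eq_big_nat _ _ (F2 := fun j => ((j == j0)%:R : R))); last first.
  move=> j _; rewrite indicE; case: (eqVneq j j0) => [->|ne]; first by rewrite mem_set.
  rewrite memNset // => Bj; have := Bd j j0 ne; rewrite -subset0 => /(_ w (conj Bj Bw)).
  done.
by rewrite sum_delta jn.
Qed.

Section thm.
Context {R : realType} d (T : measurableType d) (P : probability T R) (Y : T -> R).
Hypothesis mY : measurable_fun setT Y.
Hypothesis Y0 : forall w, 0 <= Y w.
Hypothesis Yfin : (\int[P]_w (Y w)%:E < +oo)%E.
Hypothesis Pal : atomless P.
Hypothesis Ygt1 : (1 < \int[P]_w (Y w)%:E)%E.
Variables (Xs : set (T -> R)) (n : nat) (L : nat -> R -> R).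
Hypothesis n2 : (2 <= n)%N.
Hypothesis HL : forall i, (1 <= i <= n)%N -> HI (L i).
Hypothesis adm : admissible Xs.
Variable X : T -> R.
Hypothesis HX : Xs X.
Local Notation nuY := (@nu R d T P Y).

Lemma le_part : (infconv Xs n (fun i => supLVaR P Y (L i)) X <=
    ereal_inf [set ereal_inf [set x%:E | x in [set x : R |
                  (\int[P]_(w in [set w | (x < X w)%R]) (Y w)%:E
                     <= (Lam_y L n y x)%:E)%E]]
              | y in [set y : nat -> R | y 0%N = 0%R]])%E.
Proof.
have [Xm Xc Xadd Xsub Xind] := adm.
have mX := Xm X HX.
have n1 : (1 <= n)%N by apply: leq_trans n2.
apply: le_ereal_inf_tmp => _ [y y0 <-].
apply: le_ereal_inf_tmp => _ [x hx <-].
pose S := [set w | (x < X w)%R].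
have mS : measurable S by exact: meas_gt.
pose xs i := if (i < n)%N then y i - y i.-1 else x - y n.-1.
have hLam : Lam_y L n y x = \sum_(1 <= i < n.+1) L i (xs i).
  rewrite /Lam_y big_nat_recr //= /xs ltnn addrC; congr (_ + _).
  by apply: eq_big_nat => i /andP [_ hi]; rewrite hi.
have tel k : \sum_(1 <= i < k.+1) (y i - y i.-1) = y k.
  elim: k => [|k IH]; first by rewrite big_geq // y0.
  by rewrite big_nat_recr //= IH addrC subrK.
have sxs : \sum_(1 <= i < n.+1) xs i = x.
  rewrite big_nat_recr //= /xs ltnn.
  rewrite (eq_big_nat _ _ (F2 := fun i => y i - y i.-1)); last first.
    by move=> i /andP [_ hi]; rewrite hi.
  by have := tel n.-1; rewrite prednK // => ->; rewrite addrC subrK.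
pose c j := if (j < n)%N then L j.+1 (xs j.+1) else 0.
have c0 j : 0 <= c j.
  rewrite /c; case: ifP => // hj; apply: ltW; apply: ((HL j.+1 _).2 _).1.
  by rewrite ltnS leq0n.
have ec : \sum_(0 <= j < n.-1.+1) c j = \sum_(1 <= i < n.+1) L i (xs i).
  rewrite prednK // [RHS]big_add1 /=.
  by apply: eq_big_nat => j /andP [_ hj]; rewrite /c hj.
have hS : (nuY S <= (\sum_(0 <= j < n.-1.+1) c j)%:E)%E.
  by rewrite ec -hLam; exact: hx.
have [A [mA AS Ad Ac Aw]] := @nu_split _ _ _ P Y mY Y0 Yfin Pal n.-1 c S c0 mS hS.
pose B j := if j == n.-1 then A j `|` ~` S else A j.
have mB j : measurable (B j).
  by rewrite /B; case: ifP => _ //; apply: measurableU => //; exact: measurableC.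
have AnS j : A j `&` ~` S = set0.
  by rewrite -subset0 => w [Aj nS]; exact: nS (AS j w Aj).
have Bd i j : i != j -> B i `&` B j = set0.
  move=> ij; rewrite /B; case: (eqVneq i n.-1) => [ei|ni]; case: (eqVneq j n.-1) => [ej|nj].
  - by move: ij; rewrite ei ej eqxx.
  - by rewrite setIUl (Ad _ _ ij) set0U setIC AnS.
  - by rewrite setIUr (Ad _ _ ij) set0U AnS.
  - exact: Ad.
have nn : (n.-1 < n)%N by rewrite ltn_predL.
have Bcov w : exists2 j, (j < n)%N & B j w.
  case: (pselect (S w)) => Sw.
  - have [j jk Ajw] := Aw w Sw.
    exists j; first by rewrite -(prednK n1) ltnS.
    by rewrite /B; case: ifP => _ //; left.
  - by exists n.-1 => //; rewrite /B eqxx; right.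
have BS j : B j `&` S `<=` A j.
  by rewrite /B; case: ifP => _ w [h Sw] //; case: h => // nS; exfalso; exact: nS Sw.
pose Xi i := fun w => xs i + (X w - x) * \1_(B i.-1) w.
have XiXs i : Xs (Xi i).
  exact: (Xadd _ _ (Xc (xs i)) (Xind _ _ (Xsub _ _ HX (Xc x)) (mB i.-1))).
have sumXi w : \sum_(1 <= i < n.+1) Xi i w = X w.
  rewrite /Xi big_split /= sxs -mulr_sumr big_add1 /=.
  have [j jn Bj] := Bcov w.
  by rewrite (ind_sum _ _ _ _ Bd jn Bj) mulr1 addrC subrK.
have supi i : (1 <= i <= n)%N -> (supLVaR P Y (L i) (Xi i) <= (xs i)%:E)%E.
  move=> /andP [i1 i2]; apply: (@supL_le _ _ _ P Y mY); first exact: Xm.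
  have hi : (i.-1 < n)%N by rewrite prednK.
  have hc : c i.-1 = L i (xs i) by rewrite /c hi prednK.
  rewrite -hc; apply: (@le_trans _ _ (nuY (A i.-1))); last exact: Ac.
  apply: (@nu_mono _ _ _ P Y mY Y0) => //; first exact: meas_gt (Xm _ (XiXs i)).
  move=> w /=; rewrite /Xi ltrDl indicE => h.
  case: (pselect (B i.-1 w)) => Bw.
  - by rewrite mem_set // mulr1 subr_gt0 in h; exact: BS.
  - by rewrite memNset // mulr0 ltxx in h.
apply: ge_ereal_inf; exists (\sum_(1 <= i < n.+1) supLVaR P Y (L i) (Xi i))%E.
  by exists Xi => //; split => // i _; exact: XiXs.
rewrite -sxs -sumEFin big_nat_cond [X in (_ <= X)%E]big_nat_cond.
by apply: lee_sum => i /andP [hi _]; exact: supi.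
Qed.

Lemma ge_part : (ereal_inf [set ereal_inf [set x%:E | x in [set x : R |
                  (\int[P]_(w in [set w | (x < X w)%R]) (Y w)%:E
                     <= (Lam_y L n y x)%:E)%E]]
              | y in [set y : nat -> R | y 0%N = 0%R]] <=
   infconv Xs n (fun i => supLVaR P Y (L i)) X)%E.
Proof.
have [Xm Xc Xadd Xsub Xind] := adm.
have mX := Xm X HX.
have n1 : (1 <= n)%N by apply: leq_trans n2.
apply: le_ereal_inf_tmp => _ [Xi [HXs Hsum] <-].
have rNy i : (1 <= i <= n)%N -> supLVaR P Y (L i) (Xi i) != -oo%E.
  move=> hi; rewrite gt_eqF //.
  exact: (@supL_gtNy _ _ _ P Y mY Y0 Yfin Ygt1 _ _ (HL i hi) (Xm _ (HXs i hi))).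
case: (pselect (exists i, (1 <= i <= n)%N /\ supLVaR P Y (L i) (Xi i) = +oo%E)) =>
    [[i [hi ri]]|Hfin].
  have -> : (\sum_(1 <= i < n.+1) supLVaR P Y (L i) (Xi i) = +oo)%E.
    rewrite big_nat_cond; apply/esum_eqyP.
      by move=> j /andP [hj _]; exact: rNy.
    exists i; split => //; last by rewrite hi.
    by rewrite mem_index_iota; case/andP: hi => h1 h2; rewrite h1 ltnS.
  exact: leey.
have rfin i : (1 <= i <= n)%N ->
    supLVaR P Y (L i) (Xi i) = (fine (supLVaR P Y (L i) (Xi i)))%:E.
  move=> hi; have := rNy i hi.
  case E: (supLVaR P Y (L i) (Xi i)) => [ri| |] //= _.
  by exfalso; apply: Hfin; exists i.
pose s := \sum_(1 <= i < n.+1) fine (supLVaR P Y (L i) (Xi i)).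
have hs : (\sum_(1 <= i < n.+1) supLVaR P Y (L i) (Xi i) = s%:E)%E.
  rewrite /s -sumEFin big_nat_cond [in RHS]big_nat_cond.
  by apply: eq_bigr => i /andP [hi _]; exact: rfin.
rewrite hs; apply/lee_addgt0Pr => e e0.
have nR : (0 < n%:R :> R) by rewrite ltr0n (leq_trans _ n2).
pose de := e / n%:R.
have de0 : 0 < de by rewrite divr_gt0.
pose xi i := fine (supLVaR P Y (L i) (Xi i)) + de.
have Hxi i : (1 <= i <= n)%N ->
    (nuY [set w | (xi i < Xi i w)%R] <= (L i (xi i))%:E)%E.
  move=> hi; rewrite leNgt; apply/negP => h.
  have := @supL_ge _ _ _ P Y mY Y0 Yfin Ygt1 _ _ _ (HL i hi) (Xm _ (HXs i hi)) h.
  rewrite (rfin i hi) lee_fin /xi; lra.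
pose y k := \sum_(1 <= i < k.+1) xi i.
have y0 : y 0%N = 0 by rewrite /y big_geq.
have ydiff i : (1 <= i)%N -> y i - y i.-1 = xi i.
  by case: i => // i _; rewrite /y big_nat_recr //= addrC addrK.
apply: (@le_trans _ _ (ereal_inf [set x%:E | x in [set x : R |
                  (\int[P]_(w in [set w | (x < X w)%R]) (Y w)%:E
                     <= (Lam_y L n y x)%:E)%E]])).
  by apply: ereal_inf_lbound; exists y.
apply: (@le_trans _ _ (y n)%:E); last first.
  rewrite -EFinD lee_fin /y /xi big_split /= sumr_const_nat subn1 /=.
  by rewrite -/s /de -[_ *+ n]mulr_natr divfK ?gt_eqF.
apply: ereal_inf_lbound; exists (y n) => //=.
have hL : Lam_y L n y (y n) = \sum_(1 <= i < n.+1) L i (xi i).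
  rewrite /Lam_y [RHS]big_nat_recr //= -ydiff // addrC; congr (_ + _).
  by apply: eq_big_nat => i /andP [hi _]; rewrite ydiff.
rewrite hL -sumEFin.
pose B i := if (1 <= i <= n)%N then [set w | (xi i < Xi i w)%R] else set0.
have mB i : measurable (B i).
  rewrite /B; case: ifP => hi //; exact: meas_gt (Xm _ (HXs i hi)).
have cov : forall w, (y n < X w)%R -> exists2 i, (1 <= i <= n)%N & B i w.
  move=> w hw; case: (pselect (exists2 i, (1 <= i <= n)%N & B i w)) => // Hn.
  exfalso.
  have : (X w <= y n)%R.
    rewrite -Hsum /y big_nat_cond [X in (_ <= X)%R]big_nat_cond.
    apply: ler_sum => i /andP [hi _]; rewrite leNgt; apply/negP => h.
    by apply: Hn; exists i => //; rewrite /B hi.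
  lra.
apply: (@le_trans _ _ (\sum_(1 <= i < n.+1) nuY (B i))%E).
  have mS : measurable [set w | (y n < X w)%R] by exact: meas_gt.
  exact: (@nu_sub _ _ _ P Y mY Y0 n B mB _ mS cov).
rewrite big_nat_cond [X in (_ <= X)%E]big_nat_cond.
apply: lee_sum => i /andP [hi _]; rewrite /B hi; exact: Hxi.
Qed.
End thm.


Local Open Scope ereal_scope.

Theorem mainTheorem17 (R : realType) (d : measure_display) (T : measurableType d)
  (P : probability T R) (Y : T -> R) (Xs : set (T -> R))
  (n : nat) (L : nat -> R -> R) :
  (2 <= n)%N ->
  (forall i, (1 <= i <= n)%N -> HI (L i)) ->
  atomless P ->
  measurable_fun setT Y ->
  (forall w, (0 <= Y w)%R) ->
  1 < \int[P]_w (Y w)%:E ->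
  \int[P]_w (Y w)%:E < +oo ->
  admissible Xs ->
  forall X, Xs X ->
    infconv Xs n (fun i => supLVaR P Y (L i)) X =
    ereal_inf [set ereal_inf [set x%:E | x in [set x : R |
                  \int[P]_(w in [set w | (x < X w)%R]) (Y w)%:E
                     <= (Lam_y L n y x)%:E]]
              | y in [set y : nat -> R | y 0%N = 0%R]].
Proof.
move=> n2 HL Pal mY Y0 Ygt1 Yfin adm X HX.
apply/le_anti/andP; split.
- by apply: le_part.
- by apply: ge_part.
Qed.
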